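(* Let $\mathcal I$ be an inference family on a finite hypergraph $H=(V,F)$, let $\boldsymbol\eta\in L$ with pseudomarginals $b_\alpha,b_i$, and for $\alpha\in F$ and distinct $i,j\in\alpha$ let $u^\alpha_{i\to j}=\mathrm{Var}_{b_j}(\phi_j)^{-1}\mathrm{Cov}_{b_\alpha}(\phi_j,\phi_i)$ and $$c^\alpha_{i\to j}:=\mathrm{Var}_{b_\alpha}(\phi_j)^{-1/2}\mathrm{Cov}_{b_\alpha}(\phi_j,\phi_i)\mathrm{Var}_{b_\alpha}(\phi_i)^{-1/2}.$$ Then $\mathcal M(\boldsymbol u)$ and $\mathcal M(\boldsymbol c)$ have the same set of eigenvalues.
   Context: Hypergraph notation: directed edges $\vec E=\{(\alpha\to i):i\in\alpha\in F\}$ with $s(\alpha\to i)=\alpha$, $t(\alpha\to i)=i$; $e'\rightharpoonup e$ means $t(e')\in s(e)$, $t(e')\ne t(e)$, $s(e')\ne s(e)$. For weights $\boldsymbol v=\{v^\alpha_{i\to j}\}$ with $v^\alpha_{i\to j}\in\mathbb{C}^{r_j\times r_i}$, $\mathcal M(\boldsymbol v)$ acts on $\bigoplus_{e}\mathbb{C}^{r_{t(e)}}$ by $(\mathcal M(\boldsymbol v)f)(e)=\sum_{e':e'\rightharpoonup e}v^{s(e)}_{t(e')\to t(e)}f(e')$. Inference family: exponential families $\mathcal E_i$ (statistic $\phi_i\in\mathbb{R}^{r_i}$) and $\mathcal E_\alpha$ on $\prod_{i\in\alpha}\mathcal X_i$ (statistic $(\bar\phi_\alpha,(\phi_i)_{i\in\alpha})$),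 with invertible covariance matrices and marginals of $\mathcal E_\alpha$ onto $x_i$ lying in $\mathcal E_i$. $L$ is the set of expectation parameters $((\eta_\alpha)_\alpha,(\eta_i)_i)$ with $\eta^\alpha_i=\eta_i$ for all $i\in\alpha$ (local consistency), identified with pseudomarginals $b_\alpha\in\mathcal E_\alpha$, $b_i\in\mathcal E_i$; in particular $b_i$ is the $x_i$-marginal of $b_\alpha$. *)

(* Defs.v *)
From HB Require Import structures.
From mathcomp Require Import all_boot all_order all_algebra.
From mathcomp Require Import all_classical all_reals all_analysis.
From mathcomp Require Import complex.
Set Implicit Arguments. Unset Strict Implicit. Unset Printing Implicit Defensive.
Import Order.TTheory GRing.Theory Num.Theory.
Local Open Scope ring_scope.
Local Open Scope classical_set_scope.

Definition is_psd_sqrt (R : realType) (n : nat) (A S : 'M[R]_n) : Prop :=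
  [/\ S^T = S, (forall v : 'cV[R]_n, 0 <= (v^T *m S *m v) 0 0) & S *m S = A].

(* the (positive semidefinite) matrix square root A^{1/2}, 0 if none exists *)
Definition msqrt (R : realType) (n : nat) (A : 'M[R]_n) : 'M[R]_n :=
  match pselect (exists S, is_psd_sqrt A S) with
  | left h => projT1 (cid h)
  | right _ => 0
  end.

Definition minvsqrt (R : realType) (n : nat) (A : 'M[R]_n) : 'M[R]_n :=
  invmx (msqrt A).

Definition expect (d : measure_display) (T : measurableType d) (R : realType)
  (P : probability T R) (f : T -> R) : R :=
  fine (\int[P]_w (f w)%:E).

Definition mean (d : measure_display) (T : measurableType d) (R : realType)
  (P : probability T R) (n : nat) (X : T -> 'cV[R]_n) : 'cV[R]_n :=
  \col_k expect P (fun w => X w k 0).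

Definition covm (d : measure_display) (T : measurableType d) (R : realType)
  (P : probability T R) (n m : nat) (X : T -> 'cV[R]_n) (Y : T -> 'cV[R]_m)
  : 'M[R]_(n, m) :=
  \matrix_(k, l) expect P (fun w => (X w k 0 - mean P X k 0) * (Y w l 0 - mean P Y l 0)).

(* directed edges (alpha -> i), i \in alpha \in F *)
Definition dedge (V : finType) (F : {set {set V}}) :=
  {p : {set V} * V | (p.1 \in F) && (p.2 \in p.1)}.

Definition src (V : finType) (F : {set {set V}}) (e : dedge F) : {set V} := (val e).1.
Definition tgt (V : finType) (F : {set {set V}}) (e : dedge F) : V := (val e).2.

Definition dadj (V : finType) (F : {set {set V}}) (e' e : dedge F) : bool :=
  [&& tgt e' \in src e, tgt e' != tgt e & src e' != src e].

(* index set of  ⊕_e C^{r_{t(e)}} *)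
Definition dindex (V : finType) (F : {set {set V}}) (r : V -> nat) :=
  {e : dedge F & 'I_(r (tgt e))}.

(* matrix of M(v) on ⊕_e K^{r_{t(e)}}:
   (M(v) f)(e) = sum_{e' ⇀ e} v^{s(e)}_{t(e') -> t(e)} f(e') *)
Definition Mop (K : fieldType) (V : finType) (F : {set {set V}}) (r : V -> nat)
  (v : {set V} -> forall i j : V, 'M[K]_(r j, r i)) : 'M[K]_#|{: dindex F r}| :=
  \matrix_(a, b)
    let p := enum_val a in let q := enum_val b in
    if dadj (tag q) (tag p)
    then v (src (tag p)) (tgt (tag q)) (tgt (tag p)) (tagged p) (tagged q)
    else 0.

Definition cplx (R : rcfType) (m n : nat) (A : 'M[R]_(m, n)) : 'M[R[i]]_(m, n) :=
  map_mx (fun x => (x%:C)%C) A.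

(* Main.v *)
Require Import Defs.
From HB Require Import structures.
From mathcomp Require Import all_boot all_order all_algebra.
From mathcomp Require Import all_classical all_reals all_analysis.
From mathcomp Require Import complex.
From mathcomp Require Import measurable_realfun.
From mathcomp Require Import ring lra.
Import Order.TTheory GRing.Theory Num.Theory.
Local Open Scope ring_scope.
Local Open Scope classical_set_scope.
Set Implicit Arguments. Unset Strict Implicit. Unset Printing Implicit Defensive.

Lemma expect_transfer d1 d2 (A : measurableType d1) (B : measurableType d2) (R : realType)
  (P : probability A R) (Q : probability B R) (h : A -> B)
  (mh : measurable_fun setT h)
  (hPQ : forall S, measurable S -> P (h @^-1` S) = Q S)
  (g : B -> R) (mg : measurable_fun setT g) :
  expect P (fun w => g (h w)) = expect Q g.
Proof.
rewrite /expect; congr fine.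
have -> : (\int[Q]_w (g w)%:E = \int[pushforward P h]_w (g w)%:E)%E.
  by apply: eq_measure_integral => S mS _; exact/esym/hPQ.
have mge := proj2 (measurable_EFinP _ g) mg.
rewrite integralE [in RHS]integralE.
rewrite !ge0_integral_pushforward //.
all: try by [exact: measurable_funeneg|exact: measurable_funepos|move=> y _; exact: funeneg_ge0|move=> y _; exact: funepos_ge0].
by rewrite preimage_setT -funepos_comp -funeneg_comp.
Qed.

Section CovPSD.
Context d (T : measurableType d) (R : realType) (P : probability T R).

Definition iR (f : T -> R) := P.-integrable setT (EFin \o f).

Lemma iR_D f g : iR f -> iR g -> iR (fun w => f w + g w).
Proof.
move=> hf hg; apply: eq_integrable (integrableD measurableT hf hg) => //= w _.
Qed.

Lemma iR_Z k f : iR f -> iR (fun w => k * f w).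
Proof.
move=> hf; apply: eq_integrable (integrableZl measurableT k hf) => //= w _; by rewrite EFinM.
Qed.

Lemma iR_eq f g : iR f -> (forall w, f w = g w) -> iR g.
Proof. by move=> + fg; apply: (eq_integrable measurableT) => w _ /=; rewrite fg. Qed.

Arguments iR_eq {f g}.

Lemma iR_cst k : iR (fun _ => k).
Proof. exact: finite_measure_integrable_cst. Qed.

Lemma iR_sum I (s : seq I) (f : I -> T -> R) :
  (forall i, iR (f i)) -> iR (fun w => \sum_(i <- s) f i w).
Proof.
move=> hf; elim: s => [|i s ih].
  by apply: (iR_eq (iR_cst 0)) => w; rewrite big_nil.
by apply: (iR_eq (iR_D (hf i) ih)) => w; rewrite big_cons.
Qed.

Lemma iR_le (f g : T -> R) : measurable_fun setT f -> (forall w, `|f w| <= g w) -> iR g -> iR f.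
Proof.
move=> mf fg hg; apply: (le_integrable measurableT (g := EFin \o g)) => //.
  exact/measurable_EFinP.
move=> w _ /=; rewrite lee_fin (le_trans (fg w)) //.
exact: ler_norm.
Qed.

Lemma expectD f g : iR f -> iR g ->
  expect P (fun w => f w + g w) = expect P f + expect P g.
Proof. move=> hf hg; exact: (RintegralD measurableT hf hg). Qed.

Lemma expectZ k f : iR f -> expect P (fun w => k * f w) = k * expect P f.
Proof. move=> hf; exact: (@RintegralZl _ _ _ P setT f k measurableT hf). Qed.

Lemma expect_sum I (s : seq I) (f : I -> T -> R) :
  (forall i, iR (f i)) ->
  expect P (fun w => \sum_(i <- s) f i w) = \sum_(i <- s) expect P (f i).
Proof.
move=> hf; elim: s => [|i s ih].
  rewrite big_nil.
  have -> : (fun w => \sum_(i <- [::]) f i w) = (fun=> 0) by apply/funext => w; rewrite big_nil.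
  by rewrite /expect integral0.
have -> : (fun w => \sum_(j <- i :: s) f j w) = (fun w => f i w + \sum_(j <- s) f j w).
  by apply/funext => w; rewrite big_cons.
by rewrite expectD ?ih ?big_cons //; exact: iR_sum.
Qed.

Lemma expect_ge0 f : (forall w, 0 <= f w) -> 0 <= expect P f.
Proof. by move=> hf; apply: Rintegral_ge0 => w _. Qed.

Lemma covm_sym n (X : T -> 'cV[R]_n) : (covm P X X)^T = covm P X X.
Proof.
apply/matrixP => k l; rewrite !mxE; congr expect; apply/funext => w.
exact: mulrC.
Qed.

Lemma covm_psd n (X : T -> 'cV[R]_n)
  (mX : forall k, measurable_fun setT (fun w => X w k 0))
  (iX : forall k, iR (fun w => (X w k 0) ^+ 2)) :
  forall v : 'cV[R]_n, 0 <= (v^T *m covm P X X *m v) 0 0.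
Proof.
move=> v.
pose m k := mean P X k 0.
pose Y k w := X w k 0 - m k.
have mY k : measurable_fun setT (Y k).
  exact: measurable_funB (mX k) (measurable_cst _).
have iY2 k : iR (fun w => Y k w ^+ 2).
  apply: (iR_le (g := fun w => 2 * (X w k 0)^+2 + 2 * (m k)^+2)).
  - exact: measurable_funX.
  - move=> w; rewrite ger0_norm ?sqr_ge0 // /Y.
    have := sqr_ge0 (X w k 0 + m k); set x := X w k 0; set y := m k; nra.
  - by apply: iR_D; apply: iR_Z => //; exact: iR_cst.
have iYY k l : iR (fun w => Y k w * Y l w).
  apply: (iR_le (g := fun w => Y k w ^+ 2 + Y l w ^+ 2)).
  - exact: measurable_funM.
  - move=> w; rewrite ler_norml.
    have := sqr_ge0 (Y k w + Y l w); have := sqr_ge0 (Y k w - Y l w).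
    set x := Y k w; set y := Y l w; move=> h1 h2; apply/andP; split; nra.
  - exact: iR_D.
have -> : (v^T *m covm P X X *m v) 0 0 =
   expect P (fun w => \sum_l \sum_k v k 0 * (Y k w * Y l w) * v l 0).
  rewrite expect_sum; last first.
    move=> l; apply: iR_sum => k.
    by apply: (iR_eq (iR_Z (v k 0 * v l 0) (iYY k l))) => w; ring.
  rewrite mxE; apply: eq_bigr => l _; rewrite mxE mulr_suml expect_sum; last first.
    move=> k; by apply: (iR_eq (iR_Z (v k 0 * v l 0) (iYY k l))) => w; ring.
  apply: eq_bigr => k _; rewrite !mxE.
  have -> : (fun w => v k 0 * (Y k w * Y l w) * v l 0) = (fun w => (v k 0 * v l 0) * (Y k w * Y l w)).
    by apply/funext => w; ring.
  by rewrite expectZ // /Y /m !mxE; ring.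
apply: (@expect_ge0 (fun w => \sum_l \sum_k v k 0 * (Y k w * Y l w) * v l 0)) => w.
have -> : \sum_l \sum_k v k 0 * (Y k w * Y l w) * v l 0 = (\sum_k v k 0 * Y k w) ^+ 2.
  rewrite expr2 mulr_suml; apply: eq_bigr => l _.
  rewrite mulr_sumr; apply: eq_bigr => k _; ring.
exact: sqr_ge0.
Qed.

End CovPSD.

Section SqrtSec.
Lemma interp_exists (F : fieldType) (f : F -> F) (s : seq F) :
  exists q : {poly F}, forall x, x \in s -> q.[x] = f x.
Proof.
elim: s => [|x s [q hq]]; first by exists 0.
have [xs|xs] := boolP (x \in s).
  by exists q => y; rewrite inE => /orP[/eqP->|]; [exact: hq|exact: hq].
pose N := \prod_(y <- s) ('X - y%:P).
have Nx : N.[x] != 0.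
  rewrite /N horner_prod prodf_seq_neq0; apply/allP => y ys /=.
  rewrite hornerXsubC subr_eq0; apply: contraNneq xs => ->; done.
exists (q + ((f x - q.[x]) / N.[x]) *: N) => y; rewrite inE => /orP[/eqP->|ys].
  by rewrite hornerD hornerZ mulfVK // addrC subrK.
rewrite hornerD hornerZ.
have -> : N.[y] = 0.
  rewrite /N horner_prod; apply/eqP; rewrite prodf_seq_eq0; apply/hasP.
  by exists y => //=; rewrite hornerXsubC subrr eqxx.
by rewrite mulr0 addr0 hq.
Qed.

Lemma trmx_horner (R : comNzRingType) n (A : 'M[R]_n.+1) p :
  (horner_mx A p)^T = horner_mx A^T p.
Proof.
elim/poly_ind: p => [|p c IH]; first by rewrite !rmorph0 trmx0.
rewrite !rmorphD !rmorphM /= !horner_mx_X !horner_mx_C linearD /= tr_scalar_mx.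
congr (_ + _); rewrite [X in X^T]/GRing.mul /= trmx_mul IH.
by have := comm_mx_horner p (comm_mx_refl A^T).
Qed.

Variable R : rcfType.
Local Notation C := (R[i]).

Lemma conjC_realC (x : R) : ((x%:C)%C : C)^* = (x%:C)%C.
Proof. by apply: conj_Creal; rewrite complex_real. Qed.

Lemma Re_sum I (s : seq I) (F : I -> C) : complex.Re (\sum_(i <- s) F i) = \sum_(i <- s) complex.Re (F i).
Proof.
elim: s => [|i s ih]; first by rewrite !big_nil.
by rewrite !big_cons -ih; move: (F i) (\sum_(j <- s) F j) => [a b] [c d].
Qed.

Lemma Im_sum I (s : seq I) (F : I -> C) : complex.Im (\sum_(i <- s) F i) = \sum_(i <- s) complex.Im (F i).
Proof.
elim: s => [|i s ih]; first by rewrite !big_nil.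
by rewrite !big_cons -ih; move: (F i) (\sum_(j <- s) F j) => [a b] [c d].
Qed.

Lemma Re_mulC (z : C) (a : R) : complex.Re (z * (a%:C)%C) = complex.Re z * a.
Proof. by case: z => x y /=; ring. Qed.

Lemma Im_mulC (z : C) (a : R) : complex.Im (z * (a%:C)%C) = complex.Im z * a.
Proof. by case: z => x y /=; ring. Qed.

Lemma Re_Cmul (z : C) (a : R) : complex.Re ((a%:C)%C * z) = a * complex.Re z.
Proof. by case: z => x y /=; ring. Qed.

Lemma Im_Cmul (z : C) (a : R) : complex.Im ((a%:C)%C * z) = a * complex.Im z.
Proof. by case: z => x y /=; ring. Qed.

Lemma normC2 (z : C) : z * z^* = ((complex.Re z ^+ 2 + complex.Im z ^+ 2)%:C)%C.
Proof. by rewrite add_Re2_Im2 normCK. Qed.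


Local Notation rc := (real_complex R).
Local Open Scope sesquilinear_scope.

Lemma conj_sq (K : comUnitRingType) m (X Y Z : 'M[K]_m) :
  Z *m X = 1%:M -> X *m Y *m Z *m (X *m Y *m Z) = X *m (Y *m Y) *m Z.
Proof. by move=> h; rewrite !mulmxA -(mulmxA _ Z X) h mulmx1. Qed.

Lemma psd_sqrt_ex n (A : 'M[R]_n) : A^T = A ->
  (forall v : 'cV[R]_n, 0 <= (v^T *m A *m v) 0 0) ->
  exists S : 'M[R]_n, [/\ S^T = S, (forall v : 'cV[R]_n, 0 <= (v^T *m S *m v) 0 0)
                        & S *m S = A].
Proof.
case: n A => [|n] A hsym hpsd.
  exists 0; split; [exact: trmx0 | by move=> v; rewrite !mxE big_ord0 |].
  by apply/matrixP => -[].
have hAij i j : A j i = A i j by rewrite -[in RHS]hsym mxE.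
pose Ac := A ^ rc.
have herm : Ac \is hermsymmx.
  apply/is_hermitianmxP; rewrite expr0 scale1r; apply/matrixP => i j.
  by rewrite !mxE conjC_realC hAij.
have normal := hermitian_normalmx herm.
pose P := spectralmx Ac; pose d := spectral_diag Ac.
have dreal := hermitian_spectral_diag_real herm.
have /orthomx_spectralP hAc := normal.
rewrite -/P -/d in hAc.
have Pu : P \is unitarymx := spectral_unitarymx Ac.
have /unitarymxP PPt := Pu.
have Punit : P \in unitmx := spectral_unit Ac.
have PA : P *m Ac = diag_mx d *m P by rewrite {1}hAc !mulmxA mulmxV // mul1mx.
pose r k := complex.Re (d 0 k).
have dk k : d 0 k = rc (r k) by rewrite /r RRe_real //; exact: (mxOverP dreal).
have r_ge0 k : 0 <= r k.
  have e j : \sum_a P k a * rc (A a j) = rc (r k) * P k j.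
    have := congr1 (fun M : 'M[C]_n.+1 => M k j) PA; rewrite /= mul_diag_mx !mxE dk => <-.
    by apply: eq_bigr => a _; rewrite mxE.
  have eRe j : \sum_a complex.Re (P k a) * A a j = r k * complex.Re (P k j).
    by have := congr1 (@complex.Re R) (e j); rewrite Re_sum Re_Cmul => <-;
      apply: eq_bigr => a _; rewrite Re_mulC.
  have eIm j : \sum_a complex.Im (P k a) * A a j = r k * complex.Im (P k j).
    by have := congr1 (@complex.Im R) (e j); rewrite Im_sum Im_Cmul => <-;
      apply: eq_bigr => a _; rewrite Im_mulC.
  pose x := \col_a complex.Re (P k a).
  pose y := \col_a complex.Im (P k a).
  have hx : (x^T *m A *m x) 0 0 = r k * \sum_j complex.Re (P k j) ^+ 2.
    rewrite mxE mulr_sumr; apply: eq_bigr => j _; rewrite !mxE.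
    under eq_bigr do rewrite !mxE.
    by rewrite eRe expr2 mulrA.
  have hy : (y^T *m A *m y) 0 0 = r k * \sum_j complex.Im (P k j) ^+ 2.
    rewrite mxE mulr_sumr; apply: eq_bigr => j _; rewrite !mxE.
    under eq_bigr do rewrite !mxE.
    by rewrite eIm expr2 mulrA.
  have hn : \sum_j complex.Re (P k j) ^+ 2 + \sum_j complex.Im (P k j) ^+ 2 = 1.
    apply: (@complexI R); rewrite -big_split /= rmorph_sum /=.
    have := congr1 (fun M : 'M[C]_n.+1 => M k k) PPt; rewrite !mxE eqxx /= => h.
    rewrite rmorph1 -[RHS]h.
    by apply: eq_bigr => j _; rewrite !mxE normC2.
  have := hpsd x; have := hpsd y; rewrite hx hy.
  have hX : 0 <= \sum_j complex.Re (P k j) ^+ 2 by apply: sumr_ge0 => j _; exact: sqr_ge0.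
  have hY : 0 <= \sum_j complex.Im (P k j) ^+ 2 by apply: sumr_ge0 => j _; exact: sqr_ge0.
  move: hn hX hY; set X := \sum_j _; set Y := \sum_j _ => hn hX hY h1 h2.
  nra.
have [q hq] := interp_exists (@Num.sqrt R) [seq r k | k <- enum 'I_n.+1].
have hqr k : q.[r k] = Num.sqrt (r k) by apply: hq; apply: map_f; rewrite mem_enum.
pose S := horner_mx A q.
pose s := \row_k rc (Num.sqrt (r k)).
have hSc : S ^ rc = invmx P *m diag_mx s *m P.
  rewrite /S map_horner_mx.
  have -> : A ^ rc = invmx P *m diag_mx d *m P by exact: hAc.
  have := @horner_mx_uconjC C n (map_poly rc q) P (diag_mx d) Punit.
  move=> ->; rewrite horner_mx_diag.
  congr (_ *m diag_mx _ *m _); apply/matrixP => i k; rewrite !mxE (ord1 i) dk.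
  by rewrite horner_map /= hqr.
exists S; split.
- by rewrite /S trmx_horner hsym.
- move=> v; rewrite -ler0c.
  have -> : rc ((v^T *m S *m v) 0 0) = (map_mx rc v^T *m map_mx rc S *m map_mx rc v) 0 0.
    by rewrite -!map_mxM [in RHS]mxE.
  rewrite hSc.
  have e1 : map_mx rc v^T *m invmx P = (P *m map_mx rc v)^t*.
    rewrite invmx_unitary // trmx_mul map_mxM; congr (_ *m _).
    by apply/matrixP => i j; rewrite !mxE; apply/esym/conj_Creal; rewrite complex_real.
  rewrite !mulmxA e1 -mulmxA.
  set z := P *m map_mx rc v.
  rewrite mul_mx_diag mxE; apply: sumr_ge0 => k _; rewrite !mxE.
  set w := \sum_j _.
  have -> : w^* * rc (Num.sqrt (r k)) * w = rc (Num.sqrt (r k)) * (w * w^*) by ring.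
  by apply: mulr_ge0; [rewrite ler0c sqrtr_ge0 | exact: mul_conjC_ge0].
- apply: (@map_mx_inj R C rc); rewrite map_mxM hSc.
  have -> : A ^ rc = invmx P *m diag_mx d *m P by exact: hAc.
  have DD : diag_mx s *m diag_mx s = diag_mx d.
    rewrite mul_diag_mx; apply/matrixP => i j; rewrite !mxE.
    by rewrite mulrnAr dk -rmorphM -expr2 sqr_sqrtr.
  rewrite -DD; apply: conj_sq; exact: mulmxV.
Qed.


End SqrtSec.

Lemma eig_sim (K : fieldType) N (M1 M2 D D' : 'M[K]_N) l :
  D *m D' = 1%:M -> M1 *m D = D *m M2 -> eigenvalue M1 l = eigenvalue M2 l.
Proof.
move=> DD' hM.
have D'D : D' *m D = 1%:M by exact: mulmx1C.
apply/idP/idP.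
- case/eigenvalueP => v hv v0; apply/eigenvalueP; exists (v *m D).
    by rewrite -mulmxA -hM mulmxA hv scalemxAl.
  apply: contra v0 => /eqP h; apply/eqP.
  by rewrite -[v]mulmx1 -DD' mulmxA h mul0mx.
- case/eigenvalueP => v hv v0; apply/eigenvalueP; exists (v *m D').
    have -> : M1 = D *m M2 *m D' by rewrite -hM -mulmxA DD' mulmx1.
    by rewrite !mulmxA -(mulmxA v D' D) D'D mulmx1 hv scalemxAl.
  apply: contra v0 => /eqP h; apply/eqP.
  by rewrite -[v]mulmx1 -D'D mulmxA h mul0mx.
Qed.

Section Block.
Variables (K : fieldType) (V : finType) (F : {set {set V}}) (r : V -> nat).
Local Notation I := (dindex F r).
Local Notation N := #|{: I}|.
Local Notation TG := (fun e : dedge F => 'I_(r (tgt e))).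

Definition blk (T : forall x : V, 'M[K]_(r x)) : 'M[K]_N :=
  \matrix_(a, b) \sum_(k : 'I_(r (tgt (tag (enum_val a)))))
      T _ (tagged (enum_val a)) k * ((enum_val b == Tagged TG k)%:R).

Lemma sum_enum_val (g : 'I_N -> K) (t : I) :
  \sum_b g b * ((enum_val b == t)%:R) = g (enum_rank t).
Proof.
rewrite (bigD1 (enum_rank t)) //= enum_rankK eqxx mulr1 big1 ?addr0 // => b hb.
rewrite (_ : (enum_val b == t) = false) ?mulr0 //; apply/negbTE.
by apply: contra hb => /eqP <-; rewrite enum_valK.
Qed.

Lemma blk_rank T (t : I) c :
  blk T (enum_rank t) c = \sum_(l : 'I_(r (tgt (tag t)))) T _ (tagged t) l * ((enum_val c == Tagged TG l)%:R).
Proof. by rewrite mxE enum_rankK. Qed.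

Lemma blk_mul T1 T2 : blk T1 *m blk T2 = blk (fun x => T1 x *m T2 x).
Proof.
apply/matrixP => a c.
transitivity (\sum_(k : 'I_(r (tgt (tag (enum_val a)))))
   T1 _ (tagged (enum_val a)) k * blk T2 (enum_rank (Tagged TG k)) c).
  rewrite mxE; under eq_bigr => b _ do rewrite [blk T1 _ _]mxE mulr_suml.
  rewrite exchange_big /=; apply: eq_bigr => k _.
  under eq_bigr => b _ do rewrite mulrAC.
  by rewrite (sum_enum_val (fun b => T1 _ _ k * blk T2 b c)).
under eq_bigr => k _ do rewrite blk_rank /= mulr_sumr.
rewrite exchange_big [RHS]mxE; apply: eq_bigr => l _; rewrite mxE mulr_suml.
by apply: eq_bigr => k _; rewrite mulrA.
Qed.

Lemma Tagged_tagged (y : I) : Tagged TG (tagged y) = y.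
Proof. by case: y. Qed.

Lemma blk1 : blk (fun x => 1%:M) = 1%:M.
Proof.
apply/matrixP => a c; rewrite !mxE.
rewrite (bigD1 (tagged (enum_val a))) //= big1 ?addr0; last first.
  by move=> k hk; rewrite mxE eq_sym (negbTE hk) mul0r.
by rewrite mxE eqxx mul1r Tagged_tagged (inj_eq enum_val_inj) eq_sym.
Qed.

Lemma sum_I (G : I -> K) :
  \sum_(b < N) G (enum_val b) = \sum_(e : dedge F) \sum_(k : 'I_(r (tgt e))) G (Tagged TG k).
Proof.
rewrite -(big_enum_val G) /=.
rewrite (sig_big_dep predT (fun _ => predT) (fun e (k : 'I_(r (tgt e))) => G (Tagged TG k))) /=.
by apply: eq_big => [y|y _]; [rewrite inE | case: y].
Qed.

Lemma sum_I' (H : 'I_N -> K) :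
  \sum_b H b = \sum_(e : dedge F) \sum_(k : 'I_(r (tgt e))) H (enum_rank (Tagged TG k)).
Proof.
rewrite -(sum_I (fun y => H (enum_rank y))).
by apply: eq_bigr => b _; rewrite enum_valK.
Qed.

Lemma sum_Tagged (y : I) (g : 'I_(r (tgt (tag y))) -> K) :
  \sum_l g l * ((y == Tagged TG l)%:R) = g (tagged y).
Proof.
rewrite (bigD1 (tagged y)) //= big1 ?addr0.
  by rewrite eq_Tagged eqxx mulr1.
move=> l hl; rewrite (_ : (y == _) = false) ?mulr0 //; apply: contraNF hl.
by rewrite eq_Tagged => /eqP ->.
Qed.

Lemma Mop_blk (v w : {set V} -> forall i j : V, 'M[K]_(r j, r i)) (T : forall x, 'M[K]_(r x)) :
  (forall e' e : dedge F, dadj e' e ->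
     v (src e) (tgt e') (tgt e) *m T (tgt e') = T (tgt e) *m w (src e) (tgt e') (tgt e)) ->
  @Mop K V F r v *m blk T = blk T *m @Mop K V F r w.
Proof.
move=> hvw; apply/matrixP => a c.
pose p := enum_val a; pose q := enum_val c.
transitivity (if dadj (tag q) (tag p) then
  (v (src (tag p)) (tgt (tag q)) (tgt (tag p)) *m T (tgt (tag q))) (tagged p) (tagged q) else 0).
  rewrite mxE sum_I'.
  under eq_bigr => e _ do under eq_bigr => k _ do rewrite blk_rank [@Mop K V F r v _ _]mxE enum_rankK /=.
  rewrite (bigD1 (tag q)) //= [X in _ + X]big1 ?addr0; last first.
    move=> e he; apply: big1 => k _; rewrite big1 ?mulr0 // => l _.
    rewrite (_ : (enum_val c == _) = false) ?mulr0 //; apply: contraNF he => /eqP h.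
    by rewrite /q h /= eqxx.
  under eq_bigr => k _ do rewrite sum_Tagged.
  rewrite /p; case: ifP => _; first by rewrite mxE.
  by rewrite big1 // => k _; rewrite mul0r.
rewrite [RHS]mxE; under eq_bigr => b _ do rewrite [blk T _ _]mxE mulr_suml.
rewrite exchange_big /=.
under eq_bigr => k _ do under eq_bigr => b _ do rewrite mulrAC.
under eq_bigr => k _ do rewrite (sum_enum_val (fun b => T _ _ k * @Mop K V F r w b c)).
under eq_bigr => k _ do rewrite [@Mop K V F r w _ _]mxE enum_rankK /=.
rewrite -/p -/q; case: ifP => h.
  by rewrite (hvw _ _ h) mxE.
by rewrite big1 // => k _; rewrite mulr0.
Qed.

End Block.

Lemma msqrt_spec (R : realType) n (A : 'M[R]_n) :
  (exists S, is_psd_sqrt A S) -> is_psd_sqrt A (msqrt A).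
Proof. rewrite /msqrt; case: pselect => // h _; by case: (cid h). Qed.

Lemma cplxM (R : rcfType) m n p (A : 'M[R]_(m, n)) (B : 'M[R]_(n, p)) :
  cplx (A *m B) = cplx A *m cplx B.
Proof. exact: (map_mxM (real_complex R) A B). Qed.

Lemma cplx1 (R : rcfType) n : cplx (1%:M : 'M[R]_n) = 1%:M.
Proof. exact: (map_mx1 (real_complex R)). Qed.

Theorem lemma1 (R : realType) (V : finType) (F : {set {set V}}) (r : V -> nat)
  (dX : V -> measure_display) (X : forall i : V, measurableType (dX i))
  (phi : forall i : V, X i -> 'cV[R]_(r i))
  (b : forall i : V, probability (X i) R)
  (dO : {set V} -> measure_display) (Om : forall a : {set V}, measurableType (dO a))
  (ba : forall a : {set V}, probability (Om a) R)
  (x : forall (a : {set V}) (i : V), Om a -> X i)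
  (hphi : forall (i : V) (k : 'I_(r i)), measurable_fun setT (fun y => phi i y k 0))
  (hL2 : forall (i : V) (k : 'I_(r i)),
     (b i).-integrable setT (fun y => ((phi i y k 0) ^+ 2)%:E))
  (hinv : forall i : V, covm (b i) (phi i) (phi i) \in unitmx)
  (hx : forall a i, a \in F -> i \in a -> measurable_fun setT (x a i))
  (hmarg : forall a i, a \in F -> i \in a ->
     forall A : set (X i), measurable A -> ba a (x a i @^-1` A) = b i A) :
  let Phi := fun a i => fun w => phi i (x a i w) in
  let u := fun a i j =>
     cplx (invmx (covm (b j) (phi j) (phi j)) *m covm (ba a) (Phi a j) (Phi a i)) in
  let c := fun a i j =>
     cplx (minvsqrt (covm (ba a) (Phi a j) (Phi a j)) *m covm (ba a) (Phi a j) (Phi a i)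
           *m minvsqrt (covm (ba a) (Phi a i) (Phi a i))) in
  forall lambda : R[i],
    eigenvalue (@Mop _ _ F r u) lambda = eigenvalue (@Mop _ _ F r c) lambda.
Proof.
move=> Phi u c lambda.
pose Sig i := covm (b i) (phi i) (phi i).
pose S i := msqrt (Sig i).
have hS i : is_psd_sqrt (Sig i) (S i).
  apply: msqrt_spec; apply: psd_sqrt_ex; first exact: covm_sym.
  by apply: covm_psd => k; [exact: hphi | exact: hL2].
have SS i : S i *m S i = Sig i by case: (hS i).
have Su i : S i \in unitmx.
  by have := hinv i; rewrite -/(Sig i) -SS unitmx_mul => /andP[].
have F1 a i : a \in F -> i \in a -> covm (ba a) (Phi a i) (Phi a i) = Sig i.
  move=> ha hi.
  have mx := hx a i ha hi; have hm := hmarg a i ha hi.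
  have hmean : mean (ba a) (Phi a i) = mean (b i) (phi i).
    apply/matrixP => k z; rewrite !mxE.
    exact: (expect_transfer mx hm (hphi i k)).
  rewrite /covm hmean /Sig /covm; apply/matrixP => k l; rewrite !mxE /Phi.
  have mg : measurable_fun setT (fun y => (phi i y k 0 - expect (b i) (fun w0 => phi i w0 k 0)) *
                                         (phi i y l 0 - expect (b i) (fun w0 => phi i w0 l 0))).
    by apply: measurable_funM; apply: measurable_funB => //; exact: measurable_cst.
  exact: (expect_transfer mx hm mg).
have key (e' e : dedge F) : dadj e' e ->
    c (src e) (tgt e') (tgt e) *m cplx (S (tgt e')) =
    cplx (S (tgt e)) *m u (src e) (tgt e') (tgt e).
  move=> hadj.
  have /andP[ha hj] := valP e.
  have hi : tgt e' \in src e by case/and3P: hadj.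
  rewrite /c /u /minvsqrt (F1 _ _ ha hi) (F1 _ _ ha hj) -/(S _) -/(S _) -/(Sig _).
  rewrite -!cplxM; congr cplx.
  rewrite -(mulmxA _ (invmx (S (tgt e')))) mulVmx // mulmx1.
  set j := tgt e.
  have ej : S j = invmx (S j) *m (S j *m S j) by rewrite mulKmx.
  have hh : S j *m invmx (S j *m S j) = invmx (S j).
    by rewrite {1}ej -mulmxA mulmxV ?mulmx1 // unitmx_mul !Su.
  by rewrite -(SS j) mulmxA hh.
apply/esym.
apply: (@eig_sim _ _ (@Mop _ _ F r c) (@Mop _ _ F r u) (blk F (fun y => cplx (S y))) (blk F (fun y => cplx (invmx (S y)))) lambda).
  rewrite blk_mul -[RHS](@blk1 _ _ F r); congr blk.
  apply: functional_extensionality_dep => y.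
  by rewrite -cplxM mulmxV // cplx1.
exact: Mop_blk key.
Qed.
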